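(* Let $(A,S,P,C_w,C_l)$ be a common knowledge distinguishing debate game. Let $m,n$ be positive integers and $\varepsilon\in[0,1]$ be such that, if $s$ is sampled according to $P$, the probability that $|C_w(s)|<m$ or $|C_l(s)|>n$ is at most $\varepsilon$. Suppose $m>n$ and set $r=m/n$. Let $\alpha\in(0,1]$ and $k,l$ be positive integers. Let $(\mu_i)_{i=1}^k$ be a non-increasing sequence in $(0,1]$, and $(\nu_j)_{j=1}^l$ a non-decreasing sequence in $[\alpha/\log_2(r),\infty)$. Define the following quantities: - $\theta_{i,j}=e^{-\mu_i\alpha r^{1-\nu_j}}$ for $1\le i\le k$, $1\le j\le l$; - $\zeta_i=e^{-\alpha r}\left(\frac{e}{\mu_i}\right)^{\mu_i\alpha r}$ for $1\le i\le k$, and $\zeta_0=1$; - $\xi_j=e^{-\alpha}r^{-\nu_j\log_2\left(\frac{\nu_j\log_2(r)}{e\alpha}\right)}$ for $1\le j\le l$, and $\xi_0=1$. Then there exists a policy with error at most $\sum_{i=1}^k\sum_{j=1}^l\theta_{i,j}\zeta_{i-1}\xi_{j-1}+\zeta_k+\xi_l+\varepsilon$.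
   Context: Let $\delta$ be a special default action. A CKDDG is a tuple $(A,S,P,C_w,C_l)$ with $A$ a finite set, $\delta\notin A$, $S$ a finite set of scenarios, $P$ a probability mass function on $S$, and $C_w,C_l:S\to\mathcal P(A)$. $C_w(s)$ and $C_l(s)$ are the actions available to the desired winner and the desired loser in scenario $s$. A policy is a map $M:\{1,2\}\times(A\cup\{\delta\})^2\to[0,1]$ with $M(1,a_1,a_2)+M(2,a_1,a_2)=1$ for all $a_1,a_2$. For a policy $M$ and $j\in\{1,2\}$, $s\in S$, let $w^i_M((j,s))$ be the value to agent $i$ of the two-player zero-sum game with payoff matrix $M(i,\cdot,\cdot)$ in which agent $j$ (the desired winner) chooses from $C_w(s)\cup\{\delta\}$ and the other agent chooses from $C_l(s)\cup\{\delta\}$. The error of $M$ is $\mathbb E_{s\sim P}\left[\frac{w^1_M((2,s))+w^2_M((1,s))}{2}\right]$, i.e. the probability that the desired loser wins when the roles are assigned uniformly at random. *)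

(* Defs.v *)
From HB Require Import structures.
From mathcomp Require Import all_boot all_order all_algebra.
From mathcomp Require Import all_classical all_reals.
From mathcomp Require Import sequences exp.
Set Implicit Arguments. Unset Strict Implicit. Unset Printing Implicit Defensive.
Import Order.TTheory GRing.Theory Num.Theory.
Local Open Scope ring_scope.
Local Open Scope classical_set_scope.

Inductive agent := Ag1 | Ag2.

Definition agent_eqb (i j : agent) : bool :=
  match i, j with Ag1, Ag1 | Ag2, Ag2 => true | _, _ => false end.

(* Actions are [option A]: [None] is the default action delta (delta \notin A). *)
Section Debate.
Variables (R : realType) (A S : finType).

Definition is_policy (M : agent -> option A -> option A -> R) : Prop :=
  (forall i a1 a2, 0 <= M i a1 a2 <= 1) /\
  (forall a1 a2, M Ag1 a1 a2 + M Ag2 a1 a2 = 1).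

Definition payoff (M : agent -> option A -> option A -> R) (i : agent)
  (a b : option A) : R :=
  match i with Ag1 => M Ag1 a b | Ag2 => M Ag2 b a end.

Definition mixed (D : {set option A}) (x : option A -> R) : Prop :=
  (forall a, 0 <= x a) /\ (forall a, a \notin D -> x a = 0) /\
  \sum_a x a = 1.

(* Value (to agent i) of the finite two-player zero-sum game with payoff
   matrix M(i,.,.), where agent i chooses (mixed) from Di and the opponent
   from Do: the max-min value  sup_x min_{b in Do} E_{a~x} payoff. *)
Definition game_value (M : agent -> option A -> option A -> R) (i : agent)
  (Di Do : {set option A}) : R :=
  sup [set v : R | exists x, mixed Di x /\
         forall b, b \in Do -> v <= \sum_a x a * payoff M i a b].

Definition with_delta (C : {set A}) : {set option A} :=
  None |: [set Some a | a in C].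

(* w^i_M((j,s)) : agent j is the desired winner in scenario s. *)
Definition w (Cw Cl : S -> {set A}) (M : agent -> option A -> option A -> R)
  (i j : agent) (s : S) : R :=
  if agent_eqb i j then game_value M i (with_delta (Cw s)) (with_delta (Cl s))
  else game_value M i (with_delta (Cl s)) (with_delta (Cw s)).

Definition is_pmf (P : S -> R) : Prop :=
  (forall s, 0 <= P s) /\ \sum_s P s = 1.

Definition policy_error (P : S -> R) (Cw Cl : S -> {set A})
  (M : agent -> option A -> option A -> R) : R :=
  \sum_s P s * ((w Cw Cl M Ag1 Ag2 s + w Cw Cl M Ag2 Ag1 s) / 2).

End Debate.

Definition log2 {R : realType} (x : R) : R := ln x / ln 2.

(* Main.v *)
Require Import Defs.
From HB Require Import structures.
From mathcomp Require Import all_boot all_order all_algebra.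
From mathcomp Require Import all_classical all_reals.
From mathcomp Require Import sequences exp.
From mathcomp Require Import ring lra zify.
Import Order.TTheory GRing.Theory Num.Theory.
Set Implicit Arguments. Unset Strict Implicit. Unset Printing Implicit Defensive.
Local Open Scope ring_scope.

Section Expect.
Variables (R : realType) (I : finType).

Definition wS (p : R) (s : {ffun I -> bool}) : R :=
  \prod_i (if s i then p else 1 - p).
Definition E1 (p : R) (h : {ffun I -> bool} -> R) : R :=
  \sum_s wS p s * h s.

Lemma E1_prod p (F : I -> bool -> R) :
  E1 p (fun s => \prod_i F i (s i)) = \prod_i (p * F i true + (1 - p) * F i false).
Proof.
rewrite /E1 /wS.
rewrite (eq_bigr (fun s : {ffun I -> bool} => \prod_i ((if s i then p else 1 - p) * F i (s i)))); last first.
  by move=> s _; rewrite big_split.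
rewrite -(bigA_distr_bigA (fun i (b : bool) => (if b then p else 1 - p) * F i b)).
by apply: eq_bigr => i _; rewrite big_bool /= addrC.
Qed.

Lemma E1_ext p h g : (forall s, h s = g s) -> E1 p h = E1 p g.
Proof. by move=> e; apply: eq_bigr => s _; rewrite e. Qed.

Lemma E1_1 p : E1 p (fun _ => 1) = 1.
Proof.
rewrite (@E1_ext p _ (fun s => \prod_(i : I) (fun _ _ => 1) i (s i))); last first.
  by move=> s; rewrite big1.
by rewrite (E1_prod p (fun _ _ => 1)) big1 // => i _; rewrite !mulr1 addrC subrK.
Qed.

Lemma E1_const p c : E1 p (fun _ => c) = c.
Proof.
have := E1_1 p; rewrite /E1 => e.
by rewrite -[RHS]mul1r -e big_distrl /=; apply: eq_bigr => s _; rewrite mulr1.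
Qed.

Lemma E1D p h g : E1 p (fun s => h s + g s) = E1 p h + E1 p g.
Proof. by rewrite /E1 -big_split /=; apply: eq_bigr => s _; rewrite mulrDr. Qed.

Lemma E1Z p c h : E1 p (fun s => c * h s) = c * E1 p h.
Proof. by rewrite /E1 big_distrr /=; apply: eq_bigr => s _; rewrite mulrCA. Qed.

Lemma E1_sum p (J : eqType) (r : seq J) (P : pred J) (F : J -> {ffun I -> bool} -> R) :
  E1 p (fun s => \sum_(j <- r | P j) F j s) = \sum_(j <- r | P j) E1 p (F j).
Proof. by rewrite /E1 exchange_big /=; apply: eq_bigr => s _; rewrite big_distrr. Qed.

Lemma wS_ge0 p s : 0 <= p <= 1 -> 0 <= wS p s.
Proof.
move=> /andP[p0 p1]; rewrite /wS; apply: prodr_ge0 => i _.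
by case: (s i) => //; rewrite subr_ge0.
Qed.

Lemma E1_le p h g : 0 <= p <= 1 -> (forall s, h s <= g s) -> E1 p h <= E1 p g.
Proof.
move=> hp hg; apply: ler_sum => s _; apply: ler_wpM2l; first exact: wS_ge0.
exact: hg.
Qed.

Lemma E1_ge0 p h : 0 <= p <= 1 -> (forall s, 0 <= h s) -> 0 <= E1 p h.
Proof.
move=> hp hh; apply: sumr_ge0 => s _; apply: mulr_ge0 => //; exact: wS_ge0.
Qed.

Lemma E1_swap p q (h : {ffun I -> bool} -> {ffun I -> bool} -> R) :
  E1 p (fun a => E1 q (fun b => h a b)) = E1 q (fun b => E1 p (fun a => h a b)).
Proof.
rewrite /E1; under eq_bigr do rewrite big_distrr /=.
rewrite exchange_big /=; apply: eq_bigr => b _; rewrite big_distrr /=.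
by apply: eq_bigr => a _; rewrite !mulrA (mulrC (wS q b)).
Qed.

Definition EG (h : {ffun I -> {ffun I -> bool}} -> R) : R :=
  \sum_(g : {ffun I -> {ffun I -> bool}}) (\prod_a wS (1/2) (g a)) * h g.

Lemma EG_prod (F : I -> {ffun I -> bool} -> R) :
  EG (fun g => \prod_a F a (g a)) = \prod_a E1 (1/2) (F a).
Proof.
rewrite /EG.
rewrite (eq_bigr (fun g : {ffun I -> {ffun I -> bool}} => \prod_a (wS (1/2) (g a) * F a (g a)))); last first.
  by move=> g _; rewrite big_split.
by rewrite -(bigA_distr_bigA (fun a (x : {ffun I -> bool}) => wS (1/2) x * F a x)).
Qed.

Lemma EG_ext h g : (forall s, h s = g s) -> EG h = EG g.
Proof. by move=> e; apply: eq_bigr => s _; rewrite e. Qed.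

Lemma EG_1 : EG (fun _ => 1) = 1.
Proof.
rewrite (@EG_ext _ (fun s => \prod_(i : I) (fun _ _ => 1) i (s i))); last first.
  by move=> s; rewrite big1.
by rewrite (EG_prod (fun _ _ => 1)) big1 // => i _; rewrite E1_1.
Qed.

Lemma wG_ge0 (g : {ffun I -> {ffun I -> bool}}) : 0 <= \prod_a wS (1/2) (g a).
Proof.
apply: prodr_ge0 => a _; apply: wS_ge0.
by rewrite divr_ge0 //= ler_pdivrMr // mul1r ler1n.
Qed.

Lemma EG_le h g : (forall s, h s <= g s) -> EG h <= EG g.
Proof.
move=> hg; apply: ler_sum => s _; apply: ler_wpM2l; first exact: wG_ge0.
exact: hg.
Qed.

End Expect.

Lemma exists_le_avg (R : realType) (J : finType) (w h : J -> R) :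
  (forall j, 0 <= w j) -> \sum_j w j = 1 -> exists j, h j <= \sum_j w j * h j.
Proof.
move=> w0 w1.
case: (pickP (@predT J)) => [j0 _|none].
  case: (@arg_minP _ R J j0 xpredT h isT) => j _ hj.
  exists j; apply: (@le_trans _ _ (\sum_j0 w j0 * h j)).
    by rewrite -big_distrl /= w1 mul1r.
  by apply: ler_sum => i _; apply: ler_wpM2l => //; apply: hj.
move: w1; rewrite big_pred0 // => /eqP; rewrite eq_sym oner_eq0.
done.
Qed.

Section Bounds.
Variables (R : realType) (I : finType).

Definition ind (b : bool) : R := if b then 1 else 0.

Definition Xc (W : {set I}) (s : {ffun I -> bool}) : nat :=
  #|[pred a | (a \in W) && s a]|.

Lemma prod_sel (W : {set I}) (s : {ffun I -> bool}) (c : R) :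
  \prod_a (if (a \in W) && s a then c else 1) = c ^+ Xc W s.
Proof. by rewrite -big_mkcond /= prodr_const. Qed.

Lemma E1_pow (p z : R) (W : {set I}) :
  E1 p (fun s => z ^+ Xc W s) = (p * z + (1 - p)) ^+ #|W|.
Proof.
rewrite (@E1_ext _ _ p _ (fun s : {ffun I -> bool} => \prod_a (fun a b => if (a \in W) && b then z else 1) a (s a))); last first.
  by move=> s; rewrite prod_sel.
rewrite (E1_prod p (fun a b => if (a \in W) && b then z else 1)) /=.
rewrite -(prodr_const (mem W)) /=.
rewrite [in RHS]big_mkcond /=.
by apply: eq_bigr => a _; case: (a \in W) => /=; rewrite ?mulr1 // addrC subrK.
Qed.

Lemma pow_le_exp (p z : R) (k : nat) : 0 <= p <= 1 -> 0 <= z ->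
  (p * z + (1 - p)) ^+ k <= expR (p * (z - 1) * k%:R).
Proof.
move=> /andP[p0 p1] z0.
rewrite expRM_natr; apply: lerXn2r.
- by rewrite qualifE /= addr_ge0 ?mulr_ge0 // subr_ge0.
- by rewrite qualifE /= expR_ge0.
- by rewrite -[X in X <= _]addrC (_ : 1 - p + p * z = 1 + p * (z - 1)) ?expR_ge1Dx //; ring.
Qed.

Lemma chernoff_low (p mu lam : R) (m : nat) (W : {set I}) :
  0 <= p <= 1 -> 0 < mu <= 1 -> (m <= #|W|)%N -> lam = p * m%:R ->
  E1 p (fun s => ind ((Xc W s)%:R < mu * lam))
    <= expR (- lam) * powR (expR 1 / mu) (mu * lam).
Proof.
move=> hp /andP[mu0 mu1] hm hl.
have lnmu : ln mu <= 0 by exact: ln_le0.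
have lam0 : 0 <= lam by rewrite hl mulr_ge0 //; case/andP: hp.
apply: (@le_trans _ _ (E1 p (fun s => expR (- ln mu * (mu * lam)) * mu ^+ Xc W s))).
  apply: E1_le => // s.
  have -> : mu ^+ Xc W s = expR (ln mu * (Xc W s)%:R).
    by rewrite mulrC expRM_natl lnK // qualifE /=.
  rewrite -expRD.
  rewrite /ind; case: ltP => hx; last by rewrite expR_ge0.
  rewrite -[X in X <= _]expR0 ler_expR.
  rewrite (_ : _ + _ = (- ln mu) * (mu * lam - (Xc W s)%:R)); last by ring.
  by rewrite mulr_ge0 // ?oppr_ge0 // subr_ge0 ltW.
rewrite E1Z E1_pow.
apply: (@le_trans _ _ (expR (- ln mu * (mu * lam)) * expR (p * (mu - 1) * m%:R))).
  apply: ler_wpM2l; first exact: expR_ge0.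
  apply: (le_trans (pow_le_exp _ hp (ltW mu0))).
  rewrite ler_expR; apply: ler_wnM2l.
    by case/andP: hp => p0 _; rewrite mulr_ge0_le0 // subr_le0.
  by rewrite ler_nat.
rewrite -expRD /powR.
have -> : (expR 1 / mu == 0) = false by apply/negbTE; rewrite gt_eqF // divr_gt0 // expR_gt0.
rewrite -expRD ln_div ?qualifE /= ?expR_gt0 // expRK.
rewrite hl ler_expR le_eqVlt; apply/orP; left; apply/eqP; ring.

Qed.

Lemma chernoff_high (p al t : R) (n : nat) (L : {set I}) :
  0 <= p <= 1 -> 0 < al -> al <= t -> (#|L| <= n)%N -> p * n%:R = al ->
  E1 p (fun s => ind (t < (Xc L s)%:R))
    <= expR (- al) * expR (t - t * ln (t / al)).
Proof.
move=> hp al0 alt hn hpn.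
have t0 : 0 < t by apply: lt_le_trans alt.
have z0 : 0 < t / al by rewrite divr_gt0.
have z1 : 1 <= t / al by rewrite ler_pdivlMr // mul1r.
have c0 : 0 <= ln (t / al) by exact: ln_ge0.
apply: (@le_trans _ _ (E1 p (fun s => expR (- ln (t / al) * t) * (t / al) ^+ Xc L s))).
  apply: E1_le => // s.
  have -> : (t / al) ^+ Xc L s = expR (ln (t / al) * (Xc L s)%:R).
    by rewrite expRM_natr lnK // qualifE /=.
  rewrite -expRD.
  rewrite /ind; case: ltP => hx; last by rewrite expR_ge0.
  rewrite -[X in X <= _]expR0 ler_expR.
  rewrite (_ : _ + _ = (ln (t / al)) * ((Xc L s)%:R - t)); last by ring.
  by rewrite mulr_ge0 // subr_ge0 ltW.
rewrite E1Z E1_pow.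
apply: (@le_trans _ _ (expR (- ln (t / al) * t) * expR (p * (t / al - 1) * n%:R))).
  apply: ler_wpM2l; first exact: expR_ge0.
  apply: (le_trans (pow_le_exp _ hp (ltW z0))).
  rewrite ler_expR; apply: ler_wpM2l.
    by case/andP: hp => p0 _; rewrite mulr_ge0 // subr_ge0.
  by rewrite ler_nat.
rewrite -expRD -expRD ler_expR le_eqVlt; apply/orP; left; apply/eqP.
rewrite (_ : p * (t / al - 1) * n%:R = (p * n%:R) * (t / al) - p * n%:R); last by ring.
rewrite hpn mulrCA divff ?gt_eqF // mulr1; ring.
Qed.

Lemma E1B p c (h : {ffun I -> bool} -> R) : E1 p (fun s => c - h s) = c - E1 p h.
Proof.
rewrite (@E1_ext _ _ p _ (fun s => c + (-1) * h s)); last by move=> s; rewrite mulN1r.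
by rewrite E1D E1_const E1Z mulN1r.
Qed.

Definition rowF (W L : {set I}) (sw sl : {ffun I -> bool}) (a : I)
  (g : {ffun I -> bool}) : R :=
  1 - (if (a \in W) && sw a then
         \prod_b (if (b \in L) && sl b then ind (g b) else 1) else 0).

Definition failF W L sw sl (G : {ffun I -> {ffun I -> bool}}) : R :=
  \prod_a rowF W L sw sl a (G a).

Lemma EG_fail W L sw sl :
  EG (failF W L sw sl) = (1 - (1/2) ^+ Xc L sl) ^+ Xc W sw.
Proof.
rewrite /failF (EG_prod (rowF W L sw sl)) -prod_sel.
apply: eq_bigr => a _; rewrite /rowF.
case: ((a \in W) && sw a).
  rewrite E1B.
  rewrite (E1_prod (1/2) (fun b x => if (b \in L) && sl b then ind x else 1)) /=.
  rewrite -prod_sel; congr (_ - _); apply: eq_bigr => b _.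
  case: ((b \in L) && sl b); rewrite /ind /= ?mulr1 ?mulr0 ?addr0 //.
  by rewrite addrC subrK.
rewrite (@E1_ext _ _ _ _ (fun _ => 1)); last by move=> g; rewrite subr0.
by rewrite E1_const.
Qed.

Lemma rowF_01 W L sw sl a g : 0 <= rowF W L sw sl a g <= 1.
Proof.
rewrite /rowF; case: ((a \in W) && sw a); last by rewrite subr0 ler01 lexx.
have h : 0 <= \prod_b (if (b \in L) && sl b then ind (g b) else 1) <= 1.
  apply/andP; split.
    by apply: prodr_ge0 => b _; case: ((b \in L) && sl b); rewrite /ind //; case: (g b).
  by apply: prodr_ile1 => b _; case: ((b \in L) && sl b); rewrite /ind ?ler01 ?lexx //; case: (g b); rewrite ?ler01 ?lexx.
case/andP: h => h0 h1.
by rewrite subr_ge0 h1 /= lerBlDr lerDl.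
Qed.

Lemma failF_ge0 W L sw sl G : 0 <= failF W L sw sl G.
Proof. by apply: prodr_ge0 => a _; case/andP: (rowF_01 W L sw sl a (G a)). Qed.

Lemma failF_1 (W L : {set I}) (sw sl : {ffun I -> bool}) (G : {ffun I -> {ffun I -> bool}}) :
  ~~ [exists a, [&& a \in W, sw a & [forall b, (b \in L) && sl b ==> G a b]]] ->
  failF W L sw sl G = 1.
Proof.
move=> /existsPn hn; apply: big1 => a _; rewrite /rowF.
case ha: ((a \in W) && sw a); last by rewrite subr0.
have := hn a; move: ha => /andP[-> ->] /= /forallPn [b].
rewrite negb_imply => /andP[hb hg].
by rewrite (bigD1 b) //= hb /ind (negbTE hg) mul0r subr0.
Qed.

Lemma E1_split p q (F G : {ffun I -> bool} -> R) (r1 r2 : seq nat)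
  (c : nat -> nat -> R) (D E : nat -> {ffun I -> bool} -> R) :
  E1 p (fun a => E1 q (fun b => F a + G b +
     \sum_(i <- r1) \sum_(j <- r2) c i j * D i a * E j b))
  = E1 p F + E1 q G +
     \sum_(i <- r1) \sum_(j <- r2) c i j * E1 p (D i) * E1 q (E j).
Proof.
rewrite (@E1_ext _ _ p _ (fun a => (F a + E1 q G) +
     \sum_(i <- r1) \sum_(j <- r2) (c i j * E1 q (E j)) * D i a)); last first.
  move=> a; rewrite E1D E1D E1_const E1_sum; congr (_ + _).
  apply: eq_bigr => i _; rewrite E1_sum; apply: eq_bigr => j _.
  by rewrite E1Z mulrAC.
rewrite E1D E1D E1_const E1_sum; congr (_ + _).
apply: eq_bigr => i _; rewrite E1_sum; apply: eq_bigr => j _.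
by rewrite E1Z mulrAC.
Qed.

Definition Dx (mu : nat -> R) (i x : nat) : R :=
  ind (mu i <= x%:R) * (if i == 1%N then 1 else ind (x%:R < mu i.-1)).
Definition Ey (tt : nat -> R) (j y : nat) : R :=
  ind (y%:R <= tt j) * (if j == 1%N then 1 else ind (tt j.-1 < y%:R)).

Lemma ind_ge0 b : 0 <= ind b. Proof. by rewrite /ind; case: b. Qed.
Lemma ind_le1 b : ind b <= 1. Proof. by rewrite /ind; case: b. Qed.

Lemma Dx_ge0 mu i x : 0 <= Dx mu i x.
Proof. by rewrite /Dx mulr_ge0 ?ind_ge0 //; case: eqP => // _; exact: ind_ge0. Qed.
Lemma Ey_ge0 tt j y : 0 <= Ey tt j y.
Proof. by rewrite /Ey mulr_ge0 ?ind_ge0 //; case: eqP => // _; exact: ind_ge0. Qed.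


Lemma term_le_sum (r : seq nat) (F : nat -> R) i0 :
  i0 \in r -> uniq r -> (forall i, 0 <= F i) -> F i0 <= \sum_(i <- r) F i.
Proof.
move=> hi hu h0; rewrite (bigD1_seq i0) //= lerDl.
by apply: sumr_ge0 => i _; apply: h0.
Qed.

Lemma term_ge0 (c : R) mu tt i j x y : 0 <= c -> 0 <= c * Dx mu i x * Ey tt j y.
Proof. by move=> c0; apply: mulr_ge0; [apply: mulr_ge0 => //; exact: Dx_ge0 | exact: Ey_ge0]. Qed.

Lemma layer (x y k l : nat) (mu tt : nat -> R) (th : nat -> nat -> R) (f : R) :
  (0 < k)%N -> (0 < l)%N -> 0 <= f <= 1 ->
  (forall i j, 0 <= th i j) ->
  (forall i j, (1 <= i <= k)%N -> (1 <= j <= l)%N -> mu i <= x%:R -> y%:R <= tt j ->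
     f <= th i j) ->
  f <= ind (x%:R < mu k) + ind (tt l < y%:R) +
       \sum_(i <- index_iota 1 k.+1) \sum_(j <- index_iota 1 l.+1)
          th i j * Dx mu i x * Ey tt j y.
Proof.
move=> k0 l0 /andP[f0 f1] th0 hth.
have S0 : 0 <= \sum_(i <- index_iota 1 k.+1) \sum_(j <- index_iota 1 l.+1)
          th i j * Dx mu i x * Ey tt j y.
  apply: sumr_ge0 => i _; apply: sumr_ge0 => j _.
  exact: term_ge0.
case: (ltP (x%:R) (mu k)) => hx.
  rewrite /ind /=; apply: (le_trans f1).
  by rewrite -addrA lerDl addr_ge0 // ind_ge0.
case: (ltP (tt l) (y%:R)) => hy.
  rewrite /ind /=; apply: (le_trans f1).
  by rewrite add0r lerDl.
have exP : exists i, (1 <= i <= k)%N && (mu i <= x%:R).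
  by exists k; rewrite k0 leqnn hx.
case: (ex_minnP exP) => i0 /andP[hi0 hmi0] mini.
have exQ : exists j, (1 <= j <= l)%N && (y%:R <= tt j).
  by exists l; rewrite l0 leqnn hy.
case: (ex_minnP exQ) => j0 /andP[hj0 hmj0] minj.
have D1 : Dx mu i0 x = 1.
  rewrite /Dx /ind hmi0 mul1r; case: eqP => // ne.
  case: ltP => // hle.
  have : (i0 <= i0.-1)%N.
    apply: mini; rewrite hle andbT.
    case/andP: hi0 => a b; apply/andP; split.
      by lia.
    by apply: leq_trans b; apply: leq_pred.
  by case/andP: hi0 => a _ h; lia.
have E1' : Ey tt j0 y = 1.
  rewrite /Ey /ind hmj0 mul1r; case: eqP => // ne.
  case: ltP => // hle.
  have : (j0 <= j0.-1)%N.
    apply: minj; rewrite hle andbT.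
    case/andP: hj0 => a b; apply/andP; split.
      by lia.
    by apply: leq_trans b; apply: leq_pred.
  by case/andP: hj0 => a _ h; lia.
apply: (le_trans (hth _ _ hi0 hj0 hmi0 hmj0)).
apply: (@le_trans _ _ (\sum_(i <- index_iota 1 k.+1) \sum_(j <- index_iota 1 l.+1)
          th i j * Dx mu i x * Ey tt j y)); last first.
  by rewrite lerDr addr_ge0 // ind_ge0.
apply: (@le_trans _ _ (\sum_(j <- index_iota 1 l.+1) th i0 j * Dx mu i0 x * Ey tt j y)).
  apply: (@le_trans _ _ (th i0 j0 * Dx mu i0 x * Ey tt j0 y)).
    by rewrite D1 E1' !mulr1.
  apply: (term_le_sum (F := fun j => th i0 j * Dx mu i0 x * Ey tt j y)).
  - by rewrite mem_index_iota.
  - exact: iota_uniq.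
  - by move=> j; exact: term_ge0.
apply: (term_le_sum (F := fun i => \sum_(j <- index_iota 1 l.+1) th i j * Dx mu i x * Ey tt j y)).
- by rewrite mem_index_iota.
- exact: iota_uniq.
- by move=> i; apply: sumr_ge0 => j _; exact: term_ge0.
Qed.

Lemma scenario_bound (W L : {set I}) (p : R) (k l : nat) (mu tt : nat -> R)
  (th : nat -> nat -> R) (Z Xi : nat -> R) :
  0 <= p <= 1 -> (0 < k)%N -> (0 < l)%N ->
  (forall i j, 0 <= th i j) ->
  (forall i j (x y : nat), (1 <= i <= k)%N -> (1 <= j <= l)%N -> mu i <= x%:R ->
      y%:R <= tt j -> (1 - (1/2) ^+ y) ^+ x <= th i j) ->
  (forall i, (1 <= i <= k)%N -> E1 p (fun s => ind ((Xc W s)%:R < mu i)) <= Z i) ->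
  (forall j, (1 <= j <= l)%N -> E1 p (fun s => ind (tt j < (Xc L s)%:R)) <= Xi j) ->
  Z 0%N = 1 -> Xi 0%N = 1 ->
  E1 p (fun sw => E1 p (fun sl => EG (failF W L sw sl)))
  <= \sum_(1 <= i < k.+1) \sum_(1 <= j < l.+1) th i j * Z i.-1 * Xi j.-1
     + Z k + Xi l.
Proof.
move=> hp k0 l0 th0 hth hZ hXi Z0 Xi0.
have h2 : 0 <= (1/2 : R) <= 1.
  by apply/andP; split; [rewrite divr_ge0 | rewrite ler_pdivrMr // mul1r ler1n].
apply: (@le_trans _ _ (E1 p (fun a => E1 p (fun b =>
   (fun sw => ind ((Xc W sw)%:R < mu k)) a + (fun sl => ind (tt l < (Xc L sl)%:R)) b +
     \sum_(i <- index_iota 1 k.+1) \sum_(j <- index_iota 1 l.+1)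
        th i j * (fun i sw => Dx mu i (Xc W sw)) i a * (fun j sl => Ey tt j (Xc L sl)) j b)))).
  apply: E1_le => // sw; apply: E1_le => // sl; rewrite EG_fail /=.
  apply: layer => //.
    have hq : 0 <= 1 - (1/2 : R) ^+ Xc L sl <= 1.
      apply/andP; split.
        by rewrite subr_ge0 exprn_ile1 //; case/andP: h2.
      by rewrite lerBlDr lerDl exprn_ge0 //; case/andP: h2.
    by case/andP: hq => q0 q1; rewrite exprn_ge0 // exprn_ile1.
  by move=> i j hi hj hx hy; apply: hth.
rewrite E1_split.
rewrite addrC addrA; apply: lerD; first apply: lerD.
- apply: ler_sum_nat => i hi; apply: ler_sum_nat => j hj.
  have hi' : (1 <= i <= k)%N by lia.
  have hj' : (1 <= j <= l)%N by lia.
  rewrite -mulrA -[X in _ <= X]mulrA; apply: ler_wpM2l => //.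
  apply: ler_pM.
  + by apply: E1_ge0 => // s; exact: Dx_ge0.
  + by apply: E1_ge0 => // s; exact: Ey_ge0.
  + case: (eqVneq i 1%N) => [->|ne] /=.
      rewrite Z0 -[X in _ <= X](@E1_const R I p 1).
      apply: E1_le => // s; rewrite /Dx /= mulr1; exact: ind_le1.
    apply: (@le_trans _ _ (E1 p (fun s => ind ((Xc W s)%:R < mu i.-1)))).
      apply: E1_le => // s; rewrite /Dx (negbTE ne).
      by rewrite -[X in _ <= X]mul1r ler_wpM2r ?ind_ge0 ?ind_le1.
    by apply: hZ; lia.
  + case: (eqVneq j 1%N) => [->|ne] /=.
      rewrite Xi0 -[X in _ <= X](@E1_const R I p 1).
      apply: E1_le => // s; rewrite /Ey /= mulr1; exact: ind_le1.
    apply: (@le_trans _ _ (E1 p (fun s => ind (tt j.-1 < (Xc L s)%:R)))).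
      apply: E1_le => // s; rewrite /Ey (negbTE ne).
      by rewrite -[X in _ <= X]mul1r ler_wpM2r ?ind_ge0 ?ind_le1.
    by apply: hXi; lia.
- by apply: hZ; rewrite k0 leqnn.
- by apply: hXi; rewrite l0 leqnn.
Qed.

End Bounds.

Section Game.
Variables (R : realType) (A : finType).
Implicit Types (M : agent -> option A -> option A -> R).

Lemma payoff01 M i a b : is_policy M -> 0 <= payoff M i a b <= 1.
Proof. by case=> h _; case: i => /=; apply: h. Qed.

Lemma gv_nonempty M i (Di Do : {set option A}) : is_policy M -> None \in Di ->
  ([set v : R | exists x, mixed Di x /\
         forall b, b \in Do -> v <= \sum_a x a * payoff M i a b] !=set0)%classic.
Proof.
move=> hM hN; exists 0; exists (fun a => if a == None then 1 else 0); split.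
  split; first by move=> a; case: eqP.
  split; first by move=> a ha; case: eqP => // e; move: ha; rewrite e hN.
  by rewrite (bigD1 None) //= big1 ?addr0 // => a /negbTE ->.
move=> b _; apply: sumr_ge0 => a _; apply: mulr_ge0; first by case: eqP.
by case/andP: (payoff01 i a b hM).
Qed.

Lemma gv_le1 M i (Di Do : {set option A}) : is_policy M -> None \in Di -> None \in Do ->
  game_value M i Di Do <= 1.
Proof.
move=> hM hNi hNo; apply: ge_sup; first exact: gv_nonempty.
move=> v [x [[x0 [_ x1]] hv]].
apply: (le_trans (hv _ hNo)); rewrite -x1; apply: ler_sum => a _.
rewrite -[X in _ <= X]mulr1; apply: ler_wpM2l => //.
by case/andP: (payoff01 i a None hM).
Qed.

Lemma gv_le0 M i (Di Do : {set option A}) b0 : is_policy M -> None \in Di ->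
  b0 \in Do -> (forall a, a \in Di -> payoff M i a b0 = 0) ->
  game_value M i Di Do <= 0.
Proof.
move=> hM hNi hb0 hz; apply: ge_sup; first exact: gv_nonempty.
move=> v [x [[x0 [xout x1]] hv]].
apply: (le_trans (hv _ hb0)); rewrite big1 // => a _.
case: (boolP (a \in Di)) => ha; first by rewrite hz // mulr0.
by rewrite xout // mul0r.
Qed.

Definition sel (s : {ffun A -> bool}) (a : option A) : bool :=
  if a is Some a' then s a' else false.
Definition gam (G : {ffun A -> {ffun A -> bool}}) (a b : option A) : R :=
  match a, b with Some a', Some b' => ind R (G a' b') | _, _ => 0 end.
Definition M1 s1 s2 G (a b : option A) : R :=
  if sel s1 a then (if sel s2 b then gam G a b else 1)
  else (if sel s2 b then 0 else 1/2).
Definition Mpol s1 s2 G (i : agent) (a b : option A) : R :=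
  match i with Ag1 => M1 s1 s2 G a b | Ag2 => 1 - M1 s1 s2 G a b end.

Lemma M1_01 s1 s2 G a b : 0 <= M1 s1 s2 G a b <= 1.
Proof.
have h2 : 0 <= (1/2 : R) <= 1.
  by apply/andP; split; [rewrite divr_ge0 | rewrite ler_pdivrMr // mul1r ler1n].
have h01 : 0 <= (0 : R) <= 1 by rewrite lexx ler01.
have h11 : 0 <= (1 : R) <= 1 by rewrite lexx ler01.
rewrite /M1 /gam; case: (sel s1 a); case: (sel s2 b) => //.
by case: a; case: b => // b' a'; rewrite /ind; case: (G a' b').
Qed.

Lemma Mpol_policy s1 s2 G : is_policy (Mpol s1 s2 G).
Proof.
split; last by move=> a1 a2 /=; rewrite addrC subrK.
move=> i a1 a2; case: i => /=; first exact: M1_01.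
case/andP: (M1_01 s1 s2 G a1 a2) => h0 h1.
by rewrite subr_ge0 h1 lerBlDr lerDl.
Qed.

Lemma wd_None (C : {set A}) : None \in with_delta C.
Proof. by rewrite /with_delta setU11. Qed.

Lemma wd_Some (C : {set A}) a : (Some a \in with_delta C) = (a \in C).
Proof.
rewrite /with_delta !inE /=; apply/imsetP/idP => [[a' ha' [->]] // | ha].
by exists a.
Qed.

Lemma wd_cases (C : {set A}) b : b \in with_delta C -> b = None \/ exists2 b', b = Some b' & b' \in C.
Proof.
case: b => [b'|]; last by left.
by rewrite wd_Some => h; right; exists b'.
Qed.

Lemma role1 s1 s2 G (W L : {set A}) :
  game_value (Mpol s1 s2 G) Ag2 (with_delta L) (with_delta W) <= failF R W L s1 s2 G.
Proof.
case: (boolP [exists a, [&& a \in W, s1 a & [forall b, (b \in L) && s2 b ==> G a b]]]).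
  move=> /existsP [a0 /and3P [ha0 hs hf]].
  apply: (@le_trans _ _ 0); last exact: failF_ge0.
  apply: (gv_le0 (b0 := Some a0)) => //.
  - exact: Mpol_policy.
  - exact: wd_None.
  - by rewrite wd_Some.
  move=> a /wd_cases [-> | [b' -> hb']] /=; rewrite /M1 /= hs.
    by rewrite subrr.
  case hs2: (s2 b'); last by rewrite subrr.
  have := forallP hf b'; rewrite hb' hs2 /= => ->.
  by rewrite /ind subrr.
move=> hn; rewrite failF_1 //; apply: gv_le1; [exact: Mpol_policy | exact: wd_None | exact: wd_None].
Qed.

Definition tn (G : {ffun A -> {ffun A -> bool}}) : {ffun A -> {ffun A -> bool}} :=
  [ffun a => [ffun b => ~~ G b a]].

Lemma tnK : involutive tn.
Proof. by move=> G; apply/ffunP => a; apply/ffunP => b; rewrite !ffunE negbK. Qed.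

Lemma role2 s1 s2 G (W L : {set A}) :
  game_value (Mpol s1 s2 G) Ag1 (with_delta L) (with_delta W) <= failF R W L s2 s1 (tn G).
Proof.
case: (boolP [exists a, [&& a \in W, s2 a & [forall b, (b \in L) && s1 b ==> tn G a b]]]).
  move=> /existsP [a0 /and3P [ha0 hs hf]].
  apply: (@le_trans _ _ 0); last exact: failF_ge0.
  apply: (gv_le0 (b0 := Some a0)) => //.
  - exact: Mpol_policy.
  - exact: wd_None.
  - by rewrite wd_Some.
  move=> a /wd_cases [-> | [b' -> hb']] /=; rewrite /M1 /= hs //.
  case hs1: (s1 b') => //.
  have := forallP hf b'; rewrite hb' hs1 /= !ffunE => /negbTE ->.
  by rewrite /ind.
move=> hn; rewrite failF_1 //; apply: gv_le1; [exact: Mpol_policy | exact: wd_None | exact: wd_None].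
Qed.

End Game.

Section Tot.
Variables (R : realType) (I : finType).

Lemma EG_ext' (h g : {ffun I -> {ffun I -> bool}} -> R) : (forall s, h s = g s) -> EG h = EG g.
Proof. exact: EG_ext. Qed.

Lemma EGD (h g : {ffun I -> {ffun I -> bool}} -> R) : EG (fun s => h s + g s) = EG h + EG g.
Proof. by rewrite /EG -big_split /=; apply: eq_bigr => s _; rewrite mulrDr. Qed.

Lemma EGZ c (h : {ffun I -> {ffun I -> bool}} -> R) : EG (fun s => c * h s) = c * EG h.
Proof. by rewrite /EG big_distrr /=; apply: eq_bigr => s _; rewrite mulrCA. Qed.

Lemma EG_sum (J : eqType) (r : seq J) (P : pred J) (F : J -> {ffun I -> {ffun I -> bool}} -> R) :
  EG (fun s => \sum_(j <- r | P j) F j s) = \sum_(j <- r | P j) EG (F j).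
Proof. by rewrite /EG exchange_big /=; apply: eq_bigr => s _; rewrite big_distrr. Qed.

Lemma EG_const (c : R) : EG (fun _ : {ffun I -> {ffun I -> bool}} => c) = c.
Proof.
have := @EG_1 R I; rewrite /EG => e.
have e' : \sum_(g : {ffun I -> {ffun I -> bool}}) \prod_a wS (1/2 : R) (g a) = 1.
  by rewrite -[RHS]e; apply: eq_bigr => s _; rewrite mulr1.
by rewrite -big_distrl /= e' mul1r.
Qed.

Lemma wS_half (s : {ffun I -> bool}) : wS (1/2 : R) s = \prod_(i : I) (1/2).
Proof.
rewrite /wS; apply: eq_bigr => i _; case: (s i) => //.
by rewrite {1}(splitr (1 : R)) mul1r addrK.
Qed.

Definition Etot p (h : {ffun I -> bool} -> {ffun I -> bool} -> {ffun I -> {ffun I -> bool}} -> R) :=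
  E1 p (fun s1 => E1 p (fun s2 => EG (fun G => h s1 s2 G))).

Lemma Etot_ext p h g : (forall s1 s2 G, h s1 s2 G = g s1 s2 G) -> Etot p h = Etot p g.
Proof.
move=> e; apply: E1_ext => s1; apply: E1_ext => s2; apply: EG_ext => G; exact: e.
Qed.

Lemma Etot_le p h g : 0 <= p <= 1 -> (forall s1 s2 G, h s1 s2 G <= g s1 s2 G) -> Etot p h <= Etot p g.
Proof.
move=> hp e; apply: E1_le => // s1; apply: E1_le => // s2; apply: EG_le => G; exact: e.
Qed.

Lemma EtotD p h g : Etot p (fun a b c => h a b c + g a b c) = Etot p h + Etot p g.
Proof.
rewrite /Etot -E1D; apply: E1_ext => s1; rewrite -E1D; apply: E1_ext => s2.
by rewrite EGD.
Qed.

Lemma EtotZ p c h : Etot p (fun a b d => c * h a b d) = c * Etot p h.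
Proof.
rewrite /Etot -E1Z; apply: E1_ext => s1; rewrite -E1Z; apply: E1_ext => s2.
by rewrite EGZ.
Qed.

Lemma Etot_sum p (J : eqType) (r : seq J) (P : pred J) F :
  Etot p (fun a b d => \sum_(j <- r | P j) F j a b d) = \sum_(j <- r | P j) Etot p (F j).
Proof.
rewrite /Etot -E1_sum; apply: E1_ext => s1; rewrite -E1_sum; apply: E1_ext => s2.
by rewrite EG_sum.
Qed.

Lemma Etot_const p c : Etot p (fun _ _ _ => c) = c.
Proof.
rewrite /Etot; transitivity (E1 p (fun _ : {ffun I -> bool} => c)); last exact: E1_const.
apply: E1_ext => s1; transitivity (E1 p (fun _ : {ffun I -> bool} => c)); last exact: E1_const.
apply: E1_ext => s2; exact: EG_const.
Qed.

Lemma EG_tn (h : {ffun I -> {ffun I -> bool}} -> R) : EG (fun G => h (tn G)) = EG h.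
Proof.
rewrite /EG [RHS](reindex_inj (inv_inj (@tnK I))) /=.
apply: eq_bigr => G _; congr (_ * _).
by apply: eq_bigr => a _; rewrite !wS_half.
Qed.

Lemma Etot_exists p h : 0 <= p <= 1 ->
  exists s1 s2 G, h s1 s2 G <= Etot p h.
Proof.
move=> hp.
have sw : \sum_(s : {ffun I -> bool}) wS p s = 1 by rewrite -[RHS](@E1_1 R I p) /E1; apply: eq_bigr => s _; rewrite mulr1.
have [s1 h1] := exists_le_avg (fun s1 => E1 p (fun s2 => EG (fun G => h s1 s2 G))) (fun s => wS_ge0 s hp) sw.
have [s2 h2] := exists_le_avg (fun s2 => EG (fun G => h s1 s2 G)) (fun s => wS_ge0 s hp) sw.
have sg : \sum_(G : {ffun I -> {ffun I -> bool}}) \prod_a wS (1/2 : R) (G a) = 1.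
  by rewrite -[RHS](@EG_1 R I) /EG; apply: eq_bigr => s _; rewrite mulr1.
have [G h3] := exists_le_avg (h s1 s2) (@wG_ge0 R I) sg.
exists s1, s2, G; apply: (le_trans h3); apply: (le_trans h2); exact: h1.
Qed.

End Tot.

Unset Implicit Arguments.

Theorem theorem5p1 (R : realType) (A S : finType) (P : S -> R)
  (Cw Cl : S -> {set A}) (m n : nat) (eps alpha : R) (k l : nat)
  (mu nu : nat -> R) :
  is_pmf P ->
  (0 < m)%N -> (0 < n)%N ->
  0 <= eps <= 1 ->
  \sum_(s | (#|Cw s| < m)%N || (n < #|Cl s|)%N) P s <= eps ->
  (n < m)%N ->
  let r : R := m%:R / n%:R in
  0 < alpha <= 1 ->
  (0 < k)%N -> (0 < l)%N ->
  (forall i, (1 <= i <= k)%N -> 0 < mu i <= 1) ->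
  (forall i, (1 <= i < k)%N -> mu i.+1 <= mu i) ->
  (forall j, (1 <= j <= l)%N -> alpha / log2 r <= nu j) ->
  (forall j, (1 <= j < l)%N -> nu j <= nu j.+1) ->
  let theta i j := expR (- (mu i * alpha * powR r (1 - nu j))) in
  let zeta i := if i == 0%N then 1
                else expR (- (alpha * r)) *
                     powR (expR 1 / mu i) (mu i * alpha * r) in
  let xi j := if j == 0%N then 1
              else expR (- alpha) *
                   powR r (- (nu j * log2 (nu j * log2 r / (expR 1 * alpha)))) in
  exists M : agent -> option A -> option A -> R,
    is_policy M /\
    policy_error P Cw Cl M <=
      \sum_(1 <= i < k.+1) \sum_(1 <= j < l.+1)
          theta i j * zeta i.-1 * xi j.-1
      + zeta k + xi l + eps.
Proof.
move=> [P0 P1] m0 n0 /andP[eps0 eps1] hbad hnm r /andP[al0 al1] k0 l0 hmu _ hnu _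
  theta zeta xi.
have n0R : 0 < n%:R :> R by rewrite ltr0n.
have r1 : 1 < r by rewrite /r ltr_pdivlMr // mul1r ltr_nat.
have r0 : 0 < r by apply: lt_trans r1.
have ln2 : 0 < ln (2 : R) by apply: ln_gt0; rewrite ltr1n.
have lnr : 0 < ln r by apply: ln_gt0.
have lg : 0 < log2 r by rewrite /log2 divr_gt0.
set p := alpha / n%:R.
have hp : 0 <= p <= 1.
  apply/andP; split; first by rewrite divr_ge0 // ltW.
  rewrite ler_pdivrMr // mul1r; apply: (le_trans al1); by rewrite ler1n.
set B := \sum_(1 <= i < k.+1) \sum_(1 <= j < l.+1) theta i j * zeta i.-1 * xi j.-1
      + zeta k + xi l.
have key : forall W L : {set A}, (m <= #|W|)%N -> (#|L| <= n)%N ->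
    E1 p (fun sw => E1 p (fun sl => EG (failF R W L sw sl))) <= B.
  move=> W L hW hL.
  apply: (@scenario_bound R A W L p k l (fun i => mu i * (alpha * r))
            (fun j => nu j * log2 r) theta zeta xi) => //.
  - by move=> i j; rewrite /theta expR_ge0.
  - move=> i j x y hi hj hx hy /=.
    have [mu0 _] := andP (hmu i hi).
    have h2 : 0 <= (1/2 : R) <= 1.
      by apply/andP; split; [rewrite divr_ge0 | rewrite ler_pdivrMr // mul1r ler1n].
    have [h20 h21] := andP h2.
    have q0 : 0 <= (1/2 : R) ^+ y by rewrite exprn_ge0.
    have q1 : (1/2 : R) ^+ y <= 1 by rewrite exprn_ile1.
    have hq : (1/2 : R) ^+ y = expR (- ln 2 * y%:R).
      by rewrite expRM_natr expRN lnK ?qualifE /= // div1r.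
    apply: (@le_trans _ _ (expR (- (1/2:R) ^+ y) ^+ x)).
      apply: lerXn2r.
      + by rewrite qualifE /= subr_ge0.
      + by rewrite qualifE /= expR_ge0.
      + by have := expR_ge1Dx (- (1/2 : R) ^+ y).
    rewrite -expRM_natr /theta ler_expR mulNr lerN2.
    rewrite /powR (gt_eqF r0) mulrBl expRD [1 * ln r]mul1r lnK ?qualifE //.
    rewrite mulrA -(mulrA (mu i)) [_ * x%:R]mulrC.
    apply: ler_pM.
    + by apply: mulr_ge0; [exact: ltW | apply: mulr_ge0; exact: ltW].
    + exact: expR_ge0.
    + exact: hx.
    rewrite hq ler_expR mulNr lerN2.
    move: hy; rewrite /log2 mulrA => hy.
    by rewrite mulrC -ler_pdivlMr.
  - move=> i hi /=.
    have := hmu i hi => hmui.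
    rewrite /zeta; case: eqP => [i0|_]; first by move: hi; rewrite i0.
    rewrite -mulrA; apply: (chernoff_low (m := m)) => //.
    by rewrite /p /r mulrA mulrAC.
  - move=> j hj /=; rewrite /xi; case: eqP => [j0|_]; first by move: hj; rewrite j0.
    have hal : alpha <= nu j * log2 r by rewrite -ler_pdivrMr // hnu.
    apply: (le_trans (chernoff_high (t := nu j * log2 r) hp al0 hal hL _)).
      by rewrite /p divfK // gt_eqF.
    have t0 : 0 < nu j * log2 r by apply: lt_le_trans hal.
    rewrite /powR (gt_eqF r0).
    apply: ler_wpM2l; first exact: expR_ge0.
    rewrite ler_expR le_eqVlt; apply/orP; left; apply/eqP.
    have e1 : ln (nu j * log2 r / alpha) = ln (nu j * log2 r) - ln alpha.
      by rewrite ln_div ?qualifE.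
    have e2 : ln (nu j * log2 r / (expR 1 * alpha)) = ln (nu j * log2 r) - (1 + ln alpha).
      have ea : 0 < expR 1 * alpha by rewrite mulr_gt0 ?expR_gt0.
      rewrite ln_div ?qualifE //; congr (_ - _).
      by rewrite lnM ?qualifE /= ?expR_gt0 // expRK.
    rewrite e1.
    move: e2; set t := nu j * log2 r => e2.
    rewrite /log2 e2.
    set LL := ln t.
    by rewrite /t /log2; field; rewrite gt_eqF.
have zeta0 : forall i, 0 <= zeta i.
  by move=> i; rewrite /zeta; case: eqP => _ //; rewrite mulr_ge0 ?expR_ge0 ?powR_ge0.
have xi0 : forall j, 0 <= xi j.
  by move=> j; rewrite /xi; case: eqP => _ //; rewrite mulr_ge0 ?expR_ge0 ?powR_ge0.
have B0 : 0 <= B.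
  rewrite /B !addr_ge0 //; apply: sumr_ge0 => i _; apply: sumr_ge0 => j _.
  by rewrite !mulr_ge0 // /theta expR_ge0.
pose bad s := (#|Cw s| < m)%N || (n < #|Cl s|)%N.
have v1b : forall s, Etot p (fun s1 s2 G =>
     game_value (@Mpol R A s1 s2 G) Ag2 (with_delta (Cl s)) (with_delta (Cw s)))
     <= B + ind R (bad s).
  move=> s; case hb: (bad s); rewrite /ind.
    apply: (@le_trans _ _ (Etot p (fun _ _ _ => (1 : R)))).
      apply: Etot_le => // s1 s2 G; apply: gv_le1; [exact: Mpol_policy | exact: wd_None | exact: wd_None].
    by rewrite Etot_const lerDr.
  rewrite addr0.
  apply: (@le_trans _ _ (Etot p (fun s1 s2 G => failF R (Cw s) (Cl s) s1 s2 G))).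
    apply: Etot_le => // s1 s2 G; exact: role1.
  move: hb; rewrite /bad => /norP [hW hL].
  by apply: key; rewrite leqNgt.
have v2b : forall s, Etot p (fun s1 s2 G =>
     game_value (@Mpol R A s1 s2 G) Ag1 (with_delta (Cl s)) (with_delta (Cw s)))
     <= B + ind R (bad s).
  move=> s; case hb: (bad s); rewrite /ind.
    apply: (@le_trans _ _ (Etot p (fun _ _ _ => (1 : R)))).
      apply: Etot_le => // s1 s2 G; apply: gv_le1; [exact: Mpol_policy | exact: wd_None | exact: wd_None].
    by rewrite Etot_const lerDr.
  rewrite addr0.
  apply: (@le_trans _ _ (Etot p (fun s1 s2 G => failF R (Cw s) (Cl s) s2 s1 (tn G)))).
    apply: Etot_le => // s1 s2 G; exact: role2.
  move: hb; rewrite /bad => /norP [hW hL].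
  rewrite /Etot.
  rewrite (@E1_ext _ _ p _ (fun s1 => E1 p (fun s2 => EG (failF R (Cw s) (Cl s) s2 s1)))); last first.
    move=> s1; apply: E1_ext => s2.
    exact: (EG_tn (fun G => failF R (Cw s) (Cl s) s2 s1 G)).
  rewrite E1_swap.
  by apply: key; rewrite leqNgt.
have hE : Etot p (fun s1 s2 G => policy_error P Cw Cl (@Mpol R A s1 s2 G)) <= B + eps.
  rewrite /policy_error Etot_sum.
  apply: (@le_trans _ _ (\sum_s P s * (B + ind R (bad s)))).
    apply: ler_sum => s _.
    rewrite (@Etot_ext _ _ p _ (fun s1 s2 G => (P s / 2) *
        (game_value (@Mpol R A s1 s2 G) Ag1 (with_delta (Cl s)) (with_delta (Cw s)) +
         game_value (@Mpol R A s1 s2 G) Ag2 (with_delta (Cl s)) (with_delta (Cw s))))); last first.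
      by move=> s1 s2 G; rewrite /w /= mulrAC mulrA.
    rewrite EtotZ EtotD.
    apply: (@le_trans _ _ (P s / 2 * ((B + ind R (bad s)) + (B + ind R (bad s))))).
      apply: ler_wpM2l; first by rewrite divr_ge0.
      by apply: lerD; [apply: v2b | apply: v1b].
    by rewrite le_eqVlt; apply/orP; left; apply/eqP; field.
  have -> : \sum_s P s * (B + ind R (bad s)) = B + \sum_(s | bad s) P s.
    rewrite (eq_bigr (fun s => B * P s + P s * ind R (bad s))); last first.
      by move=> s _; rewrite mulrDr mulrC.
    rewrite big_split /= -big_distrr /= P1 mulr1; congr (_ + _).
    rewrite [RHS]big_mkcond /=; apply: eq_bigr => s _.
    by rewrite /ind; case: (bad s); rewrite ?mulr1 ?mulr0.
  by rewrite lerD2l.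
have [s1 [s2 [G hG]]] := Etot_exists (fun s1 s2 G => policy_error P Cw Cl (@Mpol R A s1 s2 G)) hp.
exists (@Mpol R A s1 s2 G); split; first exact: Mpol_policy.
exact: (le_trans hG hE).
Qed.
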